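(* Let $n$ be a positive integer and let $F_n=K_1\vee P_n$ be the fan of order $n+1$. Then $\gamma_{sR}(F_n)=2$ if $n\in\{2,4\}$, and $\gamma_{sR}(F_n)=1$ if $n\notin\{2,4\}$.
   Context: $P_n$ denotes the path on $n$ vertices and $K_1$ the one-vertex graph. The join $G_1\vee G_2$ of two graphs has vertex set $V(G_1)\cup V(G_2)$ (disjoint union) and edge set $E(G_1)\cup E(G_2)\cup\{uv: u\in V(G_1), v\in V(G_2)\}$. For a graph $G=(V,E)$ and $x\in V$, $N_G[x]=\{x\}\cup\{y: xy\in E\}$. A signed Roman dominating function (SRDF) on $G$ is a function $f:V\to\{-1,1,2\}$ such that (a) $\sum_{y\in N_G[x]}f(y)\geq 1$ for every $x\in V$, and (b) every vertex $x$ with $f(x)=-1$ is adjacent to at least one vertex $y$ with $f(y)=2$. The weight of $f$ is $\sum_{x\in V}f(x)$, and $\gamma_{sR}(G)$ is the minimum weight of an SRDF on $G$. *)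

(* Defs.v *)
From mathcomp Require Import all_boot all_algebra.
Set Implicit Arguments. Unset Strict Implicit. Unset Printing Implicit Defensive.
Import GRing.Theory Num.Theory.
Local Open Scope ring_scope.

Record sgraph := SGraph {
  vert :> finType;
  adj : rel vert;
  adj_sym : symmetric adj;
  adj_irr : irreflexive adj }.

Definition cnbhd (G : sgraph) (x : G) : {set G} := [set y | (y == x) || adj x y].

Definition is_SRDF (G : sgraph) (f : G -> int) : Prop :=
  (forall x, f x = -1 \/ f x = 1 \/ f x = 2) /\
  (forall x, 1 <= \sum_(y in cnbhd x) f y) /\
  (forall x, f x = -1 -> exists y, adj x y /\ f y = 2).

Definition weight (G : sgraph) (f : G -> int) : int := \sum_(x : G) f x.

Definition gamma_sR_is (G : sgraph) (w : int) : Prop :=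
  (exists f : G -> int, is_SRDF f /\ weight f = w) /\
  (forall f : G -> int, is_SRDF f -> w <= weight f).

Definition path_adj (n : nat) : rel 'I_n :=
  fun i j => (i.+1 == j :> nat) || (j.+1 == i :> nat).

(* Fan F_n = K_1 \/ P_n : vertex set option 'I_n, None is the K_1 vertex. *)
Definition fan_adj (n : nat) : rel (option 'I_n) :=
  fun u v => match u, v with
  | None, None => false
  | None, Some _ | Some _, None => true
  | Some i, Some j => path_adj i j
  end.

Lemma fan_adj_sym n : symmetric (@fan_adj n).
Proof. by move=> [i|] [j|] //=; rewrite /path_adj orbC. Qed.

Lemma fan_adj_irr n : irreflexive (@fan_adj n).
Proof. by move=> [i|] //=; rewrite /path_adj; case: (nat_of_ord i) => //= k; rewrite !eqn_leq ltnn ?leqnSn /= ?andbF. Qed.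

Definition fan (n : nat) : sgraph := SGraph (@fan_adj_sym n) (@fan_adj_irr n).

(* Main.v *)
Require Import Defs.
From mathcomp Require Import all_boot all_algebra zify.
Import GRing.Theory.
Set Implicit Arguments. Unset Strict Implicit.
Local Open Scope ring_scope.
Lemma sum_opt (T : finType) (F : option T -> int) :
  \sum_(x : option T) F x = F None + \sum_(i : T) F (Some i).
Proof.
rewrite (bigD1 None) //=; congr (_ + _).
rewrite (reindex_omap Some id) //=; last by case.
by apply: eq_bigl => i; rewrite eqxx.
Qed.
Lemma win (h : nat -> int) i m : \sum_(0 <= k < m) (if (k == i) || (i.+1 == k) || (k.+1 == i) then h k else 0) = (if (i < m)%N then h i else 0) + (if (0 < i)%N && (i.-1 < m)%N then h i.-1 else 0) + (if (i.+1 < m)%N then h i.+1 else 0).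
Proof.
elim: m => [|m IH]; first by rewrite big_geq //= !ifF //; case: i.
rewrite big_nat_recr //= IH.
have [->|ne1] := eqVneq m i.
  simpl; by repeat (case: ifP => ?); try lia; rewrite ?addr0 ?add0r; lia.
have [<-|ne2] := eqVneq i.+1 m.
  simpl; by repeat (case: ifP => ?); try lia; rewrite ?addr0 ?add0r; lia.
have [<-|ne3] := eqVneq m.+1 i.
  simpl; by repeat (case: ifP => ?); try lia; rewrite ?addr0 ?add0r; lia.
by repeat (case: ifP => ?); simpl; lia.
Qed.
Lemma cnbhd_some n (f : fan n -> int) (h : nat -> int)
  (hf : forall j : 'I_n, f (Some j) = h j) (i : 'I_n) :
  \sum_(y in cnbhd (Some i : fan n)) f y = f None + h i + (if (0 < i)%N then h i.-1 else 0)
     + (if (i.+1 < n)%N then h i.+1 else 0).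
Proof.
rewrite big_mkcond sum_opt inE /=.
rewrite (eq_bigr (fun j : 'I_n => (fun k : nat => if (k == val i) || ((val i).+1 == k) || (k.+1 == val i) then h k else 0) (val j))); last first.
  move=> j _; rewrite inE /= /path_adj hf -orbA. done.
rewrite -(big_mkord xpredT (fun k : nat => if (k == val i) || ((val i).+1 == k) || (k.+1 == val i) then h k else 0)) win ltn_ord.
case: i => [i Hi] /=; rewrite !addrA; congr (_ + _ + _ + _).
by case: i Hi => //= i Hi; rewrite ltnW.
Qed.

Lemma weight_fan n (f : fan n -> int) (h : nat -> int)
  (hf : forall j : 'I_n, f (Some j) = h j) :
  weight f = f None + \sum_(0 <= k < n) h k.
Proof. by rewrite /weight sum_opt big_mkord; congr (_ + _); apply: eq_bigr. Qed.

Lemma cnbhd_none n (f : fan n -> int) : \sum_(y in cnbhd (None : fan n)) f y = weight f.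
Proof. by apply: eq_bigl => -[j|]; rewrite inE. Qed.

Definition gO (k : nat) : int := if (k %% 2 == 1)%N then 1 else -1.
Definition gE (k : nat) : int := if (k %% 2 == 1)%N then -1 else 1.
Definition g6 (k : nat) : int := if k == 0 then -1 else if k == 1 then 1
  else if k == 2 then -1 else if k == 3 then -1 else if k == 4 then 2
  else if k == 5 then -1 else if (k %% 2 == 1)%N then -1 else 1.

Lemma sum_gO m : \sum_(0 <= k < m) gO k = if (m %% 2 == 1)%N then -1 else 0.
Proof.
elim: m => [|m IH]; first by rewrite big_geq.
rewrite big_nat_recr //= IH /gO; by repeat (case: ifP => ?); lia.
Qed.

Lemma sum_gE m : \sum_(0 <= k < m) gE k = if (m %% 2 == 1)%N then 1 else 0.
Proof.
elim: m => [|m IH]; first by rewrite big_geq.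
rewrite big_nat_recr //= IH /gE; by repeat (case: ifP => ?); lia.
Qed.

Lemma sum_g6 m : \sum_(0 <= k < m) g6 k = if m == 0 then 0 else if m == 1 then -1
  else if m == 2 then 0 else if m == 3 then -1 else if m == 4 then -2
  else if m == 5 then 0 else if (m %% 2 == 1)%N then 0 else -1.
Proof.
elim: m => [|m IH]; first by rewrite big_geq.
rewrite big_nat_recr //= IH /g6; by repeat (case: ifP => ?); lia.
Qed.

Lemma win_gO n i : 1 <= 2 + gO i + (if (0<i)%N then gO i.-1 else 0) + (if (i.+1<n)%N then gO i.+1 else 0).
Proof. rewrite /gO; by repeat (case: ifP => ?); lia. Qed.
Lemma win_gE n i : 1 <= 2 + gE i + (if (0<i)%N then gE i.-1 else 0) + (if (i.+1<n)%N then gE i.+1 else 0).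
Proof. rewrite /gE; by repeat (case: ifP => ?); lia. Qed.
Lemma win_g6 n i : (6 <= n)%N -> 1 <= 2 + g6 i + (if (0<i)%N then g6 i.-1 else 0) + (if (i.+1<n)%N then g6 i.+1 else 0).
Proof. move=> n6; rewrite /g6; by repeat (case: ifP => ?); lia. Qed.

Lemma constr n (g : nat -> int) :
  (forall k, g k = -1 \/ g k = 1 \/ g k = 2) ->
  (forall i, 1 <= 2 + g i + (if (0<i)%N then g i.-1 else 0) + (if (i.+1<n)%N then g i.+1 else 0)) ->
  1 <= 2 + \sum_(0<=k<n) g k ->
  exists f : fan n -> int, is_SRDF f /\ weight f = 2 + \sum_(0<=k<n) g k.
Proof.
move=> Hv Hw Hs.
pose f := fun o : fan n => match o with None => 2 | Some j => g (val j) end.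
have hf : forall j : 'I_n, f (Some j) = g j by [].
exists f; split; last by rewrite (weight_fan hf).
split; [|split].
- by case=> [j|] /=; [apply: Hv | right; right].
- case=> [i|]; first by rewrite (cnbhd_some hf); apply: Hw.
  by rewrite cnbhd_none (weight_fan hf).
- by case=> [j|] //= _; exists None.
Qed.

Lemma lower1 n (f : fan n -> int) : is_SRDF f -> 1 <= weight f.
Proof. by case=> _ [H _]; rewrite -cnbhd_none; apply: H. Qed.

Lemma some2 n (f : fan n -> int) : is_SRDF f ->
  (exists y, f y = 2) \/ (forall y, f y = 1).
Proof.
case=> Hv [_ Hm].
case: (boolP [exists y, f y == 2]) => [/existsP [y /eqP Hy]|/existsPn H]; first by left; exists y.
right=> y; have := H y; case: (Hv y) => [E|[E|E]] //; last by rewrite E.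
by case: (Hm y E) => z [_ Ez]; have := H z; rewrite Ez.
Qed.

Lemma lower24 n (f : fan n -> int) : (n == 2%N) || (n == 4%N) -> is_SRDF f -> 2 <= weight f.
Proof.
case: n f => [|n] f //= Hn Hs.
pose h := fun k : nat => f (Some (inord k)).
have hf : forall j : 'I_n.+1, f (Some j) = h j by move=> j; rewrite /h inord_val.
have W1 := lower1 Hs.
have H2 : (exists y : fan n.+1, f y = 2) \/ (forall y : fan n.+1, f y = 1) by apply: some2.
case: Hs => Hv [Hw _].
have V : forall k, h k = -1 \/ h k = 1 \/ h k = 2 by move=> k; apply: Hv.
have Vc := Hv None.
have W0 := Hw (Some (inord 0)); rewrite (cnbhd_some hf) inordK // in W0.
have Wl := Hw (Some (inord n)); rewrite (cnbhd_some hf) inordK // in Wl.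
rewrite (weight_fan hf) in W1 *.
have {H2} H2 : f None = 2 \/ (exists2 k, (k <= n)%N & h k = 2) \/ (forall k, h k = 1) /\ f None = 1.
  case: H2 => [[y Hy]|Hy]; last by right; right; split=> [k|]; apply: Hy.
  case: y Hy => [j|] Hy; last by left.
  by right; left; exists (val j); [exact: leq_ord | rewrite -hf; exact: Hy].
have V0 := V 0%N; have V1 := V 1%N; have V2 := V 2%N; have V3 := V 3%N.
case/orP: Hn => /eqP [En]; subst n.
- rewrite !big_nat_recr //= big_geq // in W1 *.
  rewrite /= in W0 Wl.
  have H3 : f None = 2 \/ h 0%N = 2 \/ h 1%N = 2 \/ (h 0%N = 1 /\ h 1%N = 1 /\ f None = 1).
    case: H2 => [|[[[|[|k]] // _ E]|[Ea Eb]]]; [by left|by right;left|by right;right;left|].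
    by right; right; right; split; [|split].
  move: H3 V0 V1 Vc W0 Wl W1; clear.
  move: (f None) (h 0%N) (h 1%N) => c a0 a1; lia.
- rewrite (big_nat_recr 3) // (big_nat_recr 2) // (big_nat_recr 1) // big_nat1 /= in W1 *.
  rewrite /= in W0 Wl.
  have H3 : f None = 2 \/ h 0%N = 2 \/ h 1%N = 2 \/ h 2%N = 2 \/ h 3%N = 2 \/ (h 0%N = 1 /\ h 1%N = 1 /\ h 2%N = 1 /\ h 3%N = 1 /\ f None = 1).
    case: H2 => [|[[[|[|[|[|k]]]] // _ E]|[Ea Eb]]]; [by left|by right;left|by right;right;left|by right;right;right;left|by right;right;right;right;left|].
    by right; right; right; right; right; split; [|split; [|split; [|split]]].
  move: H3 V0 V1 V2 V3 Vc W0 Wl W1; clear.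
  move: (f None) (h 0%N) (h 1%N) (h 2%N) (h 3%N) => c a0 a1 a2 a3; lia.
Qed.

Unset Implicit Arguments.
Theorem mainTheorem13 (n : nat) : (0 < n)%N ->
  gamma_sR_is (fan n) (if (n == 2%N) || (n == 4%N) then 2 else 1).
Proof.
move=> n0; split; last first.
  move=> f Hf; case: ifP => Hn; [exact: lower24 | exact: lower1].
case: ifP => Hn.
  have -> : 2 = 2 + \sum_(0 <= k < n) gE k.
    by rewrite sum_gE; case/orP: Hn => /eqP ->.
  apply: constr.
  - by move=> k; rewrite /gE; case: ifP; auto.
  - by move=> i; apply: win_gE.
  - by rewrite sum_gE; case/orP: Hn => /eqP ->.
case: (boolP (n %% 2 == 1)%N) => Ho.
  have -> : 1 = 2 + \sum_(0 <= k < n) gO k by rewrite sum_gO Ho.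
  apply: constr.
  - by move=> k; rewrite /gO; case: ifP; auto.
  - by move=> i; apply: win_gO.
  - by rewrite sum_gO Ho.
have n6 : (6 <= n)%N by move: Hn Ho n0; lia.
have S6 : \sum_(0 <= k < n) g6 k = -1.
  rewrite sum_g6; move: Hn Ho n6; by repeat (case: ifP => ?); lia.
have -> : 1 = 2 + \sum_(0 <= k < n) g6 k by rewrite S6.
apply: constr.
- by move=> k; rewrite /g6; repeat case: ifP; auto.
- by move=> i; apply: win_g6.
- by rewrite S6.
Qed.
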